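(* Let $\gamma_1,\dots,\gamma_k$ be distinct real numbers, and for a natural number $N$ and real $x$ define \[A_N(x)=\lim_{T\to\infty}\frac1{2T}\int_{-T}^T|1+e^{it\gamma_1}+\cdots+e^{it\gamma_k}|^{2N}e^{itx}\,\mathrm dt.\] (a) $A_N(0)\gg_k(k+1)^{2N}N^{-k/2}$. (b) Let $\varepsilon>0$ and $j\in\{1,\dots,k\}$. If $N$ is large enough in terms of $\varepsilon$ and $k$, then $A_N(\gamma_j)\ge(1-\varepsilon)A_N(0)$. *)

(* Defs.v *)
From Stdlib Require Import Reals Lra List.
From Coquelicot Require Import Coquelicot.
Open Scope R_scope.

(* Frequencies gamma_1..gamma_k are encoded as gam 0, ..., gam (k-1). *)
Definition rsum (k : nat) (f : nat -> R) : R :=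
  fold_right Rplus 0 (map f (seq 0 k)).

(* P(t) = 1 + e^{i t gam_1} + ... + e^{i t gam_k}, written via real and imaginary parts. *)
Definition P_re (k : nat) (gam : nat -> R) (t : R) : R :=
  1 + rsum k (fun j => cos (t * gam j)).
Definition P_im (k : nat) (gam : nat -> R) (t : R) : R :=
  rsum k (fun j => sin (t * gam j)).

Definition Pabs2N (k : nat) (gam : nat -> R) (N : nat) (t : R) : R :=
  (P_re k gam t ^ 2 + P_im k gam t ^ 2) ^ N.

Definition avg_re (k : nat) (gam : nat -> R) (N : nat) (x T : R) : R :=
  / (2 * T) * RInt (fun t => Pabs2N k gam N t * cos (t * x)) (- T) T.
Definition avg_im (k : nat) (gam : nat -> R) (N : nat) (x T : R) : R :=
  / (2 * T) * RInt (fun t => Pabs2N k gam N t * sin (t * x)) (- T) T.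

(* A_N(x) = L : the complex limit as T -> +oo of the average exists and equals
   the (real) number L, i.e. real part -> L and imaginary part -> 0. *)
Definition A_N_is (k : nat) (gam : nat -> R) (N : nat) (x L : R) : Prop :=
  is_lim (avg_re k gam N x) p_infty L /\ is_lim (avg_im k gam N x) p_infty 0.

Definition distinct_freqs (k : nat) (gam : nat -> R) : Prop :=
  forall i j : nat, (i < k)%nat -> (j < k)%nat -> i <> j -> gam i <> gam j.

(* Main.v *)
Require Import Defs.
From Stdlib Require Import Reals Lra List.
From Coquelicot Require Import Coquelicot.
From Stdlib Require Import Lia Arith ZArith.
Open Scope R_scope.

Definition lsum {A} (l : list A) (f : A -> R) : R :=
  fold_right (fun a acc => f a + acc) 0 l.

Lemma lsum_nil {A} (f : A -> R) : lsum nil f = 0.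
Proof. reflexivity. Qed.
Lemma lsum_cons {A} a l (f : A -> R) : lsum (a :: l) f = f a + lsum l f.
Proof. reflexivity. Qed.
Lemma lsum_app {A} l1 l2 (f : A -> R) : lsum (l1 ++ l2) f = lsum l1 f + lsum l2 f.
Proof. induction l1; simpl; [lra|]. unfold lsum in *; simpl; rewrite IHl1; lra. Qed.
Lemma lsum_ext {A} l (f g : A -> R) : (forall a, In a l -> f a = g a) -> lsum l f = lsum l g.
Proof. induction l; simpl; intros H; [reflexivity|]. unfold lsum in *; simpl.
 rewrite H by auto; rewrite IHl; auto. Qed.
Lemma lsum_plus {A} l (f g : A -> R) : lsum l (fun a => f a + g a) = lsum l f + lsum l g.
Proof. induction l; unfold lsum in *; simpl; [lra|]. rewrite IHl; lra. Qed.
Lemma lsum_scal {A} l c (f : A -> R) : lsum l (fun a => c * f a) = c * lsum l f.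
Proof. induction l; unfold lsum in *; simpl; [lra|]. rewrite IHl; lra. Qed.
Lemma lsum_scalr {A} l c (f : A -> R) : lsum l (fun a => f a * c) = lsum l f * c.
Proof. induction l; unfold lsum in *; simpl; [lra|]. rewrite IHl; lra. Qed.
Lemma lsum_opp {A} l (f : A -> R) : lsum l (fun a => - f a) = - lsum l f.
Proof. induction l; unfold lsum in *; simpl; [lra|]. rewrite IHl; lra. Qed.
Lemma lsum_minus {A} l (f g : A -> R) : lsum l (fun a => f a - g a) = lsum l f - lsum l g.
Proof. induction l; unfold lsum in *; simpl; [lra|]. rewrite IHl; lra. Qed.
Lemma lsum_const {A} (l : list A) c : lsum l (fun _ => c) = INR (length l) * c.
Proof. induction l; unfold lsum in *; simpl length; [simpl; lra|]. rewrite S_INR. simpl. rewrite IHl; lra. Qed.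
Lemma lsum_le {A} l (f g : A -> R) : (forall a, In a l -> f a <= g a) -> lsum l f <= lsum l g.
Proof. induction l; simpl; intros H; [lra|]. unfold lsum in *; simpl.
 assert (lsum l f <= lsum l g) by (apply IHl; auto).
 specialize (H a (or_introl eq_refl)).
 unfold lsum in *; lra. Qed.
Lemma lsum_nonneg {A} l (f : A -> R) : (forall a, In a l -> 0 <= f a) -> 0 <= lsum l f.
Proof. intros H. replace 0 with (lsum l (fun _ => 0)). apply lsum_le; auto.
 rewrite lsum_const; lra. Qed.
Lemma lsum_swap {A B} (l1 : list A) (l2 : list B) (f : A -> B -> R) :
  lsum l1 (fun a => lsum l2 (fun b => f a b)) = lsum l2 (fun b => lsum l1 (fun a => f a b)).
Proof. induction l1.
 - rewrite lsum_nil. symmetry. transitivity (lsum l2 (fun _ => 0)).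
   + apply lsum_ext; reflexivity.
   + rewrite lsum_const; lra.
 - rewrite lsum_cons, IHl1. rewrite <- lsum_plus. apply lsum_ext. intros; rewrite lsum_cons; lra. Qed.
Lemma lsum_flat_map {A B} (l : list A) (g : A -> list B) f :
  lsum (flat_map g l) f = lsum l (fun a => lsum (g a) f).
Proof. induction l; simpl; [reflexivity|]. rewrite lsum_app, IHl. reflexivity. Qed.
Lemma lsum_map {A B} (l : list A) (g : A -> B) f : lsum (map g l) f = lsum l (fun a => f (g a)).
Proof. induction l; simpl; [reflexivity|]. unfold lsum in *; simpl; rewrite IHl; reflexivity. Qed.
Lemma lsum_mult {A B} (l1 : list A) (l2 : list B) f g :
  lsum l1 f * lsum l2 g = lsum l1 (fun a => lsum l2 (fun b => f a * g b)).
Proof. rewrite <- lsum_scalr. apply lsum_ext; intros. rewrite <- lsum_scal. reflexivity. Qed.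

Lemma seq_S' n : seq 0 (S n) = seq 0 n ++ (n :: nil).
Proof. rewrite seq_S. reflexivity. Qed.

Lemma lsum_delta n b (F : nat -> R) :
  lsum (seq 0 n) (fun i => if Nat.eq_dec i b then F i else 0) = if lt_dec b n then F b else 0.
Proof. induction n.
 - simpl. destruct (lt_dec b 0); [lia|reflexivity].
 - rewrite seq_S', lsum_app, IHn. simpl. destruct (Nat.eq_dec n b), (lt_dec b n), (lt_dec b (S n)); subst; try lia; lra. Qed.

Lemma lsum_ind2 q b A B : (b < q)%nat ->
  lsum (seq 0 q) (fun i => if Nat.eq_dec i b then A else B) = A + (INR q - 1) * B.
Proof. intros Hb.
 assert (E: forall i, (if Nat.eq_dec i b then A else B) = B + (if Nat.eq_dec i b then A - B else 0)).
 { intros i; destruct (Nat.eq_dec i b); lra. }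
 rewrite (lsum_ext _ _ _ (fun i _ => E i)), lsum_plus, lsum_const, seq_length.
 rewrite (lsum_delta q b (fun _ => A - B)). destruct (lt_dec b q); [|lia]. lra. Qed.


Definition g (gam : nat -> R) (i : nat) : R := match i with O => 0 | S j => gam j end.

Fixpoint W (q N : nat) : list (list nat) :=
  match N with
  | O => nil :: nil
  | S n => flat_map (fun w => map (fun i => i :: w) (seq 0 q)) (W q n)
  end.

Lemma lsum_W_S q n f : lsum (W q (S n)) f = lsum (W q n) (fun w => lsum (seq 0 q) (fun i => f (i :: w))).
Proof. simpl. rewrite lsum_flat_map. apply lsum_ext; intros. rewrite lsum_map. reflexivity. Qed.
Lemma lsum_W_0 q f : lsum (W q 0) f = f nil.
Proof. simpl. unfold lsum; simpl; lra. Qed.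

Definition Gam gam (u : list nat) : R := fold_right (fun i acc => g gam i + acc) 0 u.

Lemma rsum_lsum k f : rsum k f = lsum (seq 0 k) f.
Proof. unfold rsum. generalize (seq 0 k). induction l; simpl; auto. unfold lsum in *; simpl; rewrite IHl; auto. Qed.

Lemma lsum_seq_S k f : lsum (seq 0 (S k)) f = f O + lsum (seq 0 k) (fun j => f (S j)).
Proof. change (seq 0 (S k)) with (0%nat :: seq 1 k). rewrite lsum_cons. rewrite <- seq_shift, lsum_map. reflexivity. Qed.

Lemma P_re_eq k gam t : P_re k gam t = lsum (seq 0 (S k)) (fun i => cos (t * g gam i)).
Proof. unfold P_re. rewrite rsum_lsum, lsum_seq_S. simpl g. rewrite Rmult_0_r, cos_0. reflexivity. Qed.
Lemma P_im_eq k gam t : P_im k gam t = lsum (seq 0 (S k)) (fun i => sin (t * g gam i)).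
Proof. unfold P_im. rewrite rsum_lsum, lsum_seq_S. simpl g. rewrite Rmult_0_r, sin_0. lra. Qed.

Lemma cs_sn_step k gam n t :
  let q := S k in
  lsum (W q (S n)) (fun u => cos (t * Gam gam u)) =
    P_re k gam t * lsum (W q n) (fun u => cos (t * Gam gam u)) - P_im k gam t * lsum (W q n) (fun u => sin (t * Gam gam u))
  /\ lsum (W q (S n)) (fun u => sin (t * Gam gam u)) =
    P_im k gam t * lsum (W q n) (fun u => cos (t * Gam gam u)) + P_re k gam t * lsum (W q n) (fun u => sin (t * Gam gam u)).
Proof. intros q. rewrite !lsum_W_S, P_re_eq, P_im_eq. split.
 - rewrite <- !lsum_scal, <- lsum_minus. apply lsum_ext; intros w _.
   rewrite <- !lsum_scalr, <- lsum_minus. apply lsum_ext; intros i _. simpl Gam.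
   rewrite Rmult_plus_distr_l, cos_plus. lra.
 - rewrite <- !lsum_scal, <- lsum_plus. apply lsum_ext; intros w _.
   rewrite <- !lsum_scalr, <- lsum_plus. apply lsum_ext; intros i _. simpl Gam.
   rewrite Rmult_plus_distr_l, sin_plus. lra.
Qed.

Lemma Pabs_pow k gam N t :
  Pabs2N k gam N t = (lsum (W (S k) N) (fun u => cos (t * Gam gam u)))^2 + (lsum (W (S k) N) (fun u => sin (t * Gam gam u)))^2.
Proof. unfold Pabs2N. induction N.
 - rewrite !lsum_W_0. simpl Gam. rewrite Rmult_0_r, cos_0, sin_0. simpl; lra.
 - destruct (cs_sn_step k gam N t) as [H1 H2]. rewrite H1, H2. rewrite <- tech_pow_Rmult, IHN. ring. Qed.

Lemma Pabs_double k gam N t :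
  Pabs2N k gam N t = lsum (W (S k) N) (fun u => lsum (W (S k) N) (fun v => cos (t * (Gam gam u - Gam gam v)))).
Proof. rewrite Pabs_pow. simpl pow. rewrite !Rmult_1_r, !lsum_mult, <- lsum_plus.
 apply lsum_ext; intros u _. rewrite <- lsum_plus. apply lsum_ext; intros v _.
 rewrite Rmult_minus_distr_l, cos_minus. ring. Qed.


Definition Ic (w T : R) : R := if Req_EM_T w 0 then 2 * T else 2 * sin (T * w) / w.
Definition dlt (w : R) : R := if Req_EM_T w 0 then 1 else 0.

Lemma is_RInt_val (f : R -> R) a b (l l2 : R) : is_RInt f a b l -> l = l2 -> is_RInt f a b l2.
Proof. intros H ->; exact H. Qed.

Lemma is_RInt_cos w T : is_RInt (fun t => cos (t * w)) (- T) T (Ic w T).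
Proof. unfold Ic. destruct (Req_EM_T w 0) as [->|Hw].
 - eapply is_RInt_ext; [|eapply is_RInt_val; [apply (is_RInt_const (-T) T 1)|]].
   + intros; simpl. rewrite Rmult_0_r, cos_0. reflexivity.
   + unfold scal; simpl; unfold mult; simpl. ring.
 - eapply is_RInt_val.
   + apply (is_RInt_derive (fun t => sin (t * w) / w)).
     * intros x _. auto_derive; auto. field; auto.
     * intros x _. apply (@ex_derive_continuous R_AbsRing R_NormedModule). auto_derive; auto.
   + unfold minus, plus, opp; simpl. replace (- T * w) with (- (T * w)) by ring.
     rewrite sin_neg. field; auto.
Qed.

Lemma is_RInt_sin w T : is_RInt (fun t => sin (t * w)) (- T) T 0.
Proof. destruct (Req_EM_T w 0) as [->|Hw].
 - eapply is_RInt_ext; [|eapply is_RInt_val; [apply (is_RInt_const (-T) T 0)|]].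
   + intros; simpl. rewrite Rmult_0_r, sin_0. reflexivity.
   + unfold scal; simpl; unfold mult; simpl. ring.
 - eapply is_RInt_val.
   + apply (is_RInt_derive (fun t => - cos (t * w) / w)).
     * intros x _. auto_derive; auto. field; auto.
     * intros x _. apply (@ex_derive_continuous R_AbsRing R_NormedModule). auto_derive; auto.
   + unfold minus, plus, opp; simpl. replace (- T * w) with (- (T * w)) by ring.
     rewrite cos_neg. field; auto.
Qed.

Lemma is_RInt_lsum {A} (l : list A) (F : A -> R -> R) V lo hi :
  (forall a, is_RInt (F a) lo hi (V a)) ->
  is_RInt (fun t => lsum l (fun a => F a t)) lo hi (lsum l V).
Proof. intros H. induction l.
 - eapply is_RInt_ext; [|eapply is_RInt_val; [apply (is_RInt_const lo hi 0)|]].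
   + intros; reflexivity.
   + unfold scal; simpl; unfold mult; simpl. ring.
 - eapply is_RInt_ext; [|apply (is_RInt_plus _ _ _ _ _ _ (H a) IHl)].
   intros; reflexivity.
Qed.

Lemma is_lim_lsum {A} (l : list A) (F : A -> R -> R) (V : A -> R) :
  (forall a, is_lim (F a) p_infty (V a)) ->
  is_lim (fun T => lsum l (fun a => F a T)) p_infty (lsum l V).
Proof. intros H. induction l.
 - rewrite lsum_nil. eapply is_lim_ext; [|apply (is_lim_const 0)]. intros; reflexivity.
 - rewrite lsum_cons. apply (is_lim_plus' _ _ _ _ _ (H a) IHl).
Qed.

Lemma lim_Ic w : is_lim (fun T => / (2 * T) * Ic w T) p_infty (dlt w).
Proof. unfold Ic, dlt. destruct (Req_EM_T w 0) as [->|Hw].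
 - eapply is_lim_ext_loc; [|apply is_lim_const].
   exists 0. intros T HT. field. lra.
 - assert (Ha : 0 < Rabs w) by (apply Rabs_pos_lt; auto).
   assert (L : is_lim (fun T => / Rabs w * / T) p_infty 0).
   { replace (Finite 0) with (Rbar_mult (/ Rabs w) (Rbar_inv p_infty)) by (simpl; f_equal; ring).
     apply is_lim_scal_l. apply is_lim_inv; [apply is_lim_id| discriminate]. }
   apply (is_lim_le_le_loc (fun T => - (/ Rabs w * / T)) (fun T => / Rabs w * / T)).
   + exists 0. intros T HT.
     assert (E : / (2 * T) * (2 * sin (T * w) / w) = / (Rabs w * T) * (sin (T * w) * (Rabs w / w))).
     { assert (Rabs w <> 0) by lra. assert (T <> 0) by lra. field; auto. }
     rewrite E. rewrite Rinv_mult.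
     assert (Hs := SIN_bound (T * w)).
     assert (Hr : Rabs w / w = 1 \/ Rabs w / w = -1).
     { unfold Rabs. destruct (Rcase_abs w); [right|left]; field; auto. }
     assert (0 < / Rabs w * / T) by (apply Rmult_lt_0_compat; apply Rinv_0_lt_compat; lra).
     destruct Hr as [-> | ->]; split; nra.
   + replace (Finite 0) with (Rbar_opp 0) by (simpl; f_equal; ring). apply is_lim_opp. exact L.
   + exact L.
Qed.


Definition Lval k gam N x : R :=
  lsum (W (S k) N) (fun u => lsum (W (S k) N) (fun v =>
    / 2 * dlt (Gam gam u - Gam gam v + x) + / 2 * dlt (Gam gam u - Gam gam v - x))).

Lemma is_lim_comb (f h : R -> R) (a b c : R) :
  is_lim f p_infty a -> is_lim h p_infty b -> is_lim (fun T => c * f T + c * h T) p_infty (c * a + c * b).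
Proof. intros Hf Hh. apply (is_lim_plus' (fun T => c * f T) (fun T => c * h T)).
 - replace (Finite (c * a)) with (Rbar_mult c a) by reflexivity. apply is_lim_scal_l; auto.
 - replace (Finite (c * b)) with (Rbar_mult c b) by reflexivity. apply is_lim_scal_l; auto.
Qed.

Lemma integrand_cos k gam N x t :
  lsum (W (S k) N) (fun u => lsum (W (S k) N) (fun v => / 2 * cos (t * (Gam gam u - Gam gam v + x)) + / 2 * cos (t * (Gam gam u - Gam gam v - x))))
  = Pabs2N k gam N t * cos (t * x).
Proof. rewrite Pabs_double. rewrite <- lsum_scalr. apply lsum_ext; intros u _.
  rewrite <- lsum_scalr. apply lsum_ext; intros v _.
  replace (t * (Gam gam u - Gam gam v + x)) with ((t * (Gam gam u - Gam gam v)) + t * x) by ring.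
  replace (t * (Gam gam u - Gam gam v - x)) with ((t * (Gam gam u - Gam gam v)) - t * x) by ring.
  set (X := t * (Gam gam u - Gam gam v)). rewrite cos_plus, cos_minus. field. Qed.

Lemma integrand_sin k gam N x t :
  lsum (W (S k) N) (fun u => lsum (W (S k) N) (fun v => / 2 * sin (t * (x + (Gam gam u - Gam gam v))) + / 2 * sin (t * (x - (Gam gam u - Gam gam v)))))
  = Pabs2N k gam N t * sin (t * x).
Proof. rewrite Pabs_double. rewrite <- lsum_scalr. apply lsum_ext; intros u _.
  rewrite <- lsum_scalr. apply lsum_ext; intros v _.
  replace (t * (x + (Gam gam u - Gam gam v))) with (t * x + (t * (Gam gam u - Gam gam v))) by ring.
  replace (t * (x - (Gam gam u - Gam gam v))) with (t * x - (t * (Gam gam u - Gam gam v))) by ring.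
  set (X := t * (Gam gam u - Gam gam v)). rewrite sin_plus, sin_minus. field. Qed.

Lemma A_N_Lval k gam N x : A_N_is k gam N x (Lval k gam N x).
Proof. split.
 - set (WW := W (S k) N).
   assert (HI : forall T, is_RInt (fun t => Pabs2N k gam N t * cos (t * x)) (- T) T
      (lsum WW (fun u => lsum WW (fun v => / 2 * Ic (Gam gam u - Gam gam v + x) T + / 2 * Ic (Gam gam u - Gam gam v - x) T)))).
   { intros T. eapply is_RInt_ext; [intros t _; apply integrand_cos|].
     - apply (is_RInt_lsum WW (fun u t => lsum WW (fun v => / 2 * cos (t * (Gam gam u - Gam gam v + x)) + / 2 * cos (t * (Gam gam u - Gam gam v - x))))).
       intros u. apply (is_RInt_lsum WW (fun v t => / 2 * cos (t * (Gam gam u - Gam gam v + x)) + / 2 * cos (t * (Gam gam u - Gam gam v - x)))).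
       intros v. apply (is_RInt_plus (V := R_NormedModule)); apply (is_RInt_scal (V := R_NormedModule)); apply is_RInt_cos. }
   unfold avg_re, Lval. apply is_lim_ext with (fun T => lsum WW (fun u => lsum WW (fun v =>
        / 2 * (/ (2 * T) * Ic (Gam gam u - Gam gam v + x) T) + / 2 * (/ (2 * T) * Ic (Gam gam u - Gam gam v - x) T)))).
   { intros T. rewrite (is_RInt_unique _ _ _ _ (HI T)). rewrite <- lsum_scal. apply lsum_ext; intros u _.
     rewrite <- lsum_scal. apply lsum_ext; intros v _. ring. }
   apply (is_lim_lsum WW (fun u T => lsum WW (fun v => / 2 * (/ (2 * T) * Ic (Gam gam u - Gam gam v + x) T) + / 2 * (/ (2 * T) * Ic (Gam gam u - Gam gam v - x) T)))).
   intros u. apply (is_lim_lsum WW (fun v T => / 2 * (/ (2 * T) * Ic (Gam gam u - Gam gam v + x) T) + / 2 * (/ (2 * T) * Ic (Gam gam u - Gam gam v - x) T))).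
   intros v. apply is_lim_comb; apply lim_Ic.
 - set (WW := W (S k) N).
   assert (HI : forall T, is_RInt (fun t => Pabs2N k gam N t * sin (t * x)) (- T) T
      (lsum WW (fun u => lsum WW (fun v => / 2 * 0 + / 2 * 0)))).
   { intros T. eapply is_RInt_ext; [intros t _; apply integrand_sin|].
     - apply (is_RInt_lsum WW (fun u t => lsum WW (fun v => / 2 * sin (t * (x + (Gam gam u - Gam gam v))) + / 2 * sin (t * (x - (Gam gam u - Gam gam v)))))).
       intros u. apply (is_RInt_lsum WW (fun v t => / 2 * sin (t * (x + (Gam gam u - Gam gam v))) + / 2 * sin (t * (x - (Gam gam u - Gam gam v))))).
       intros v. apply (is_RInt_plus (V := R_NormedModule)); apply (is_RInt_scal (V := R_NormedModule)); apply is_RInt_sin. }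
   unfold avg_im. eapply is_lim_ext; [|apply (is_lim_const 0)].
   intros T. simpl. rewrite (is_RInt_unique _ _ _ _ (HI T)).
   transitivity (/ (2 * T) * lsum WW (fun u => lsum WW (fun v => 0))).
   + rewrite !lsum_const. ring.
   + f_equal. apply lsum_ext; intros; apply lsum_ext; intros; ring.
Qed.


Definition nval k gam N y : R :=
  lsum (W (S k) N) (fun u => lsum (W (S k) N) (fun v => dlt (Gam gam u - Gam gam v - y))).

Lemma dlt_eq a b : a = b -> dlt a = dlt b.
Proof. intros ->; reflexivity. Qed.
Lemma dlt_opp a : dlt (- a) = dlt a.
Proof. unfold dlt. destruct (Req_EM_T (-a) 0), (Req_EM_T a 0); lra. Qed.
Lemma dlt_range a : 0 <= dlt a <= 1.
Proof. unfold dlt. destruct (Req_EM_T a 0); lra. Qed.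

Lemma nval_opp k gam N y : nval k gam N (- y) = nval k gam N y.
Proof. unfold nval. rewrite lsum_swap. apply lsum_ext; intros u _; apply lsum_ext; intros v _.
 rewrite <- dlt_opp. apply dlt_eq. ring. Qed.

Lemma Lval_nval k gam N x : Lval k gam N x = nval k gam N x.
Proof. unfold Lval. transitivity (/2 * nval k gam N (- x) + / 2 * nval k gam N x).
 - unfold nval. rewrite <- !lsum_scal, <- lsum_plus. apply lsum_ext; intros u _.
   rewrite <- !lsum_scal, <- lsum_plus. apply lsum_ext; intros v _.
   f_equal; f_equal; apply dlt_eq; ring.
 - rewrite nval_opp. lra.
Qed.

Fixpoint cnt (b : nat) (u : list nat) : nat :=
  match u with nil => O | i :: w => ((if Nat.eq_dec i b then 1 else 0) + cnt b w)%nat end.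

Lemma INR_cnt_cons b i w : INR (cnt b (i :: w)) = (if Nat.eq_dec i b then 1 else 0) + INR (cnt b w).
Proof. simpl. rewrite plus_INR. destruct (Nat.eq_dec i b); simpl; lra. Qed.

Lemma W_prop q N u : In u (W q N) -> length u = N /\ List.Forall (fun i => (i < q)%nat) u.
Proof. revert u; induction N; simpl; intros u H.
 - destruct H as [<-|[]]. auto.
 - apply in_flat_map in H. destruct H as [w [Hw Hu]]. apply in_map_iff in Hu.
   destruct Hu as [i [<- Hi]]. apply in_seq in Hi. destruct (IHN w Hw). simpl; split; auto. constructor; auto; lia.
Qed.

Lemma cnt_le b u : (cnt b u <= length u)%nat.
Proof. induction u; simpl; auto. destruct (Nat.eq_dec a b); lia. Qed.

Lemma W_count q N : lsum (W q N) (fun _ => 1) = INR q ^ N.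
Proof. induction N.
 - rewrite lsum_W_0. simpl; lra.
 - rewrite lsum_W_S. transitivity (lsum (W q N) (fun _ => INR q)).
   + apply lsum_ext; intros. rewrite lsum_const, length_seq. ring.
   + rewrite lsum_const. rewrite lsum_const in IHN. simpl. rewrite <- IHN. ring.
Qed.

Lemma chernoff_sum q N b l : (b < q)%nat ->
  lsum (W q N) (fun u => exp (l * INR (cnt b u))) = (INR q - 1 + exp l) ^ N.
Proof. intros Hb. induction N.
 - rewrite lsum_W_0. simpl. rewrite Rmult_0_r, exp_0. lra.
 - rewrite lsum_W_S. simpl pow. rewrite <- IHN, <- lsum_scal. apply lsum_ext; intros w _.
   transitivity (lsum (seq 0 q) (fun i => if Nat.eq_dec i b then exp l * exp (l * INR (cnt b w)) else exp (l * INR (cnt b w)))).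
   + apply lsum_ext; intros i _. rewrite INR_cnt_cons. destruct (Nat.eq_dec i b).
     * rewrite <- exp_plus. f_equal. ring.
     * f_equal. ring.
   + rewrite lsum_ind2 by auto. ring.
Qed.

Lemma second_moment q N b : (b < q)%nat ->
  lsum (W q N) (fun u => (INR q * INR (cnt b u) - INR N) ^ 2) = INR q ^ N * INR N * (INR q - 1).
Proof. intros Hb. induction N.
 - rewrite lsum_W_0. simpl. ring.
 - rewrite lsum_W_S.
   transitivity (lsum (W q N) (fun w => INR q * (INR q * INR (cnt b w) - INR N) ^ 2 + INR q * (INR q - 1))).
   + apply lsum_ext; intros w _.
     transitivity (lsum (seq 0 q) (fun i => if Nat.eq_dec i b then (INR q * INR (cnt b w) - INR N + (INR q - 1)) ^ 2 else (INR q * INR (cnt b w) - INR N - 1) ^ 2)).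
     * apply lsum_ext; intros i _. rewrite INR_cnt_cons, S_INR. destruct (Nat.eq_dec i b); f_equal; ring.
     * rewrite lsum_ind2 by auto. ring.
   + rewrite lsum_plus, lsum_scal, IHN, lsum_const.
     assert (WC : INR (length (W q N)) = INR q ^ N) by (rewrite <- W_count, lsum_const; ring).
     rewrite WC, S_INR. simpl. ring.
Qed.

Fixpoint E (a b : nat) (h : list nat -> R) (u : list nat) : R :=
  match u with
  | nil => 0
  | i :: w => (if Nat.eq_dec i a then h (b :: w) else 0) + E a b (fun w' => h (i :: w')) w
  end.

Lemma E_ext a b h1 h2 u : (forall w, h1 w = h2 w) -> E a b h1 u = E a b h2 u.
Proof. revert h1 h2; induction u; intros h1 h2 H; simpl; auto.
 rewrite H. f_equal. apply IHu. intros; apply H. Qed.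

Lemma E_sum q N a b h : (a < q)%nat -> (b < q)%nat ->
  lsum (W q N) (E a b h) = lsum (W q N) (fun u => INR (cnt b u) * h u).
Proof. intros Ha Hb. revert h. induction N; intros h.
 - rewrite !lsum_W_0. simpl. ring.
 - rewrite !lsum_W_S.
   transitivity (lsum (W q N) (fun w => h (b :: w) + lsum (seq 0 q) (fun i => E a b (fun w' => h (i :: w')) w))).
   + apply lsum_ext; intros w _. simpl E. rewrite lsum_plus. f_equal.
     rewrite (lsum_ind2 q a (h (b :: w)) 0 Ha). ring.
   + rewrite lsum_plus, lsum_swap.
     rewrite (lsum_ext (seq 0 q) _ (fun i => lsum (W q N) (fun u => INR (cnt b u) * h (i :: u)))) by (intros; apply IHN).
     rewrite <- lsum_swap, <- lsum_plus. apply lsum_ext; intros w _.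
     transitivity (lsum (seq 0 q) (fun i => (if Nat.eq_dec i b then h (b :: w) else 0) + INR (cnt b w) * h (i :: w))).
     * rewrite lsum_plus, (lsum_ind2 q b (h (b :: w)) 0 Hb). ring.
     * apply lsum_ext; intros i _. rewrite INR_cnt_cons. destruct (Nat.eq_dec i b); subst; ring.
Qed.

Lemma E_dlt gam a b u : forall c,
  E a b (fun w => dlt (Gam gam w - c)) u = INR (cnt a u) * dlt (Gam gam u + g gam b - g gam a - c).
Proof. induction u as [|i w IH]; intros c; simpl E.
 - simpl. ring.
 - rewrite (E_ext a b _ (fun w' => dlt (Gam gam w' - (c - g gam i)))) by (intros; simpl Gam; apply dlt_eq; ring).
   rewrite IH, INR_cnt_cons. simpl Gam.
   rewrite (dlt_eq (Gam gam w + g gam b - g gam a - (c - g gam i)) (g gam i + Gam gam w + g gam b - g gam a - c)) by ring.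
   destruct (Nat.eq_dec i a).
   + subst. rewrite (dlt_eq (g gam b + Gam gam w - c) (g gam a + Gam gam w + g gam b - g gam a - c)) by ring. ring.
   + ring.
Qed.


Lemma dbl_count k gam N j : (j < k)%nat ->
  lsum (W (S k) N) (fun u => lsum (W (S k) N) (fun v => INR (cnt 0 u) * dlt (Gam gam u - Gam gam v - 0))) =
  lsum (W (S k) N) (fun u => lsum (W (S k) N) (fun v => INR (cnt (S j) u) * dlt (Gam gam u - Gam gam v - gam j))).
Proof. intros Hj. rewrite lsum_swap, (lsum_swap _ _ (fun u v => INR (cnt (S j) u) * _)).
 apply lsum_ext; intros v _.
 transitivity (lsum (W (S k) N) (E 0 (S j) (fun w => dlt (Gam gam w - (Gam gam v + gam j))))).
 - apply lsum_ext; intros u _. rewrite E_dlt. simpl g. f_equal. apply dlt_eq; ring.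
 - rewrite E_sum by lia. apply lsum_ext; intros u _. f_equal. apply dlt_eq; ring.
Qed.

Lemma exp_pow_n x n : exp (INR n * x) = exp x ^ n.
Proof. induction n. simpl. rewrite Rmult_0_l, exp_0; auto.
 rewrite S_INR, Rmult_plus_distr_r, Rmult_1_l, exp_plus, IHn. simpl. ring. Qed.

Lemma exp_quad x : Rabs x <= / 2 -> exp x <= 1 + x + 2 * x ^ 2.
Proof. intros Hx. apply Rabs_le_between in Hx.
 assert (H1 := exp_ineq1_le (- x)). assert (Hp := exp_pos x).
 assert (E : exp x * exp (- x) = 1) by (rewrite <- exp_plus; replace (x + - x) with 0 by ring; apply exp_0).
 assert (0 <= x ^ 2 * (1 - 2 * x)) by (apply Rmult_le_pos; [apply pow2_ge_0|lra]).
 nra. Qed.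

Lemma exp_mono x y : x <= y -> exp x <= exp y.
Proof. intros H. destruct (Rle_lt_or_eq_dec _ _ H) as [h| ->]; [left; apply exp_increasing; auto| lra]. Qed.

Definition Bhi b th (u : list nat) : R := if Rlt_dec th (INR (cnt b u)) then 1 else 0.
Definition Blo b th (u : list nat) : R := if Rlt_dec (INR (cnt b u)) th then 1 else 0.

Lemma tail_hi q N b th l : (b < q)%nat -> 0 <= l ->
  lsum (W q N) (Bhi b th) <= exp (- l * th) * (INR q - 1 + exp l) ^ N.
Proof. intros Hb Hl. rewrite <- (chernoff_sum q N b _ Hb). rewrite <- lsum_scal. apply lsum_le; intros u _.
 unfold Bhi. rewrite <- exp_plus. destruct (Rlt_dec th (INR (cnt b u))).
 - rewrite <- exp_0. apply exp_mono. nra.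
 - left; apply exp_pos.
Qed.

Lemma tail_lo q N b th l : (b < q)%nat -> 0 <= l ->
  lsum (W q N) (Blo b th) <= exp (l * th) * (INR q - 1 + exp (- l)) ^ N.
Proof. intros Hb Hl. rewrite <- (chernoff_sum q N b _ Hb). rewrite <- lsum_scal. apply lsum_le; intros u _.
 unfold Blo. rewrite <- exp_plus. destruct (Rlt_dec (INR (cnt b u)) th).
 - rewrite <- exp_0. apply exp_mono. nra.
 - left; apply exp_pos.
Qed.

Definition rho (Q d : R) := exp (- (d ^ 2 / (8 * Q))).

Lemma base_bound Q d s : 1 <= Q -> 0 < d <= 1 -> (s = 1 \/ s = -1) ->
  (Q - 1 + exp (s * (d / 4))) * exp (- s * (d / 4) * ((1 + s * d) / Q)) <= Q * rho Q d.
Proof. intros HQ Hd Hs. set (l := s * (d / 4)).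
 assert (Hl : Rabs l <= / 2). { unfold l. apply Rabs_le. destruct Hs as [-> | ->]; lra. }
 assert (H1 := exp_quad l Hl).
 assert (H2 := exp_ineq1_le ((l + 2 * l ^ 2) / Q)).
 assert (Q - 1 + exp l <= Q * exp ((l + 2 * l ^ 2) / Q)).
 { assert (Q * (1 + (l + 2 * l ^ 2) / Q) = Q + l + 2 * l ^ 2) by (field; lra). nra. }
 unfold rho. apply Rle_trans with (Q * exp ((l + 2 * l ^ 2) / Q) * exp (- s * (d / 4) * ((1 + s * d) / Q))).
 - apply Rmult_le_compat_r; [left; apply exp_pos|auto].
 - rewrite Rmult_assoc, <- exp_plus. apply Rmult_le_compat_l; [lra|]. apply exp_mono.
   unfold l. destruct Hs as [-> | ->]; apply Rmult_le_reg_r with Q; try lra;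
   field_simplify; try lra; nra.
Qed.

Lemma tail_hi' k N j d : (j < k)%nat -> 0 < d <= 1 ->
  lsum (W (S k) N) (Bhi (S j) ((1 + d) * (INR N / INR (S k)))) <= (INR (S k) * rho (INR (S k)) d) ^ N.
Proof. intros Hj Hd. set (Q := INR (S k)). assert (HQ : 1 <= Q) by (unfold Q; rewrite S_INR; pose proof (pos_INR k); lra).
 eapply Rle_trans; [apply (tail_hi (S k) N (S j) _ (1 * (d / 4))); [lia|lra]|].
 replace (- (1 * (d / 4)) * ((1 + d) * (INR N / Q))) with (INR N * (- 1 * (d / 4) * ((1 + 1 * d) / Q))) by (field; lra).
 rewrite exp_pow_n, <- Rpow_mult_distr. apply pow_incr. split.
 - apply Rmult_le_pos; [left; apply exp_pos|]. pose proof (exp_pos (1 * (d/4))). unfold Q in HQ. lra.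
 - rewrite Rmult_comm. fold Q. apply (base_bound Q d 1); auto.
Qed.

Lemma tail_lo' k N d : 0 < d <= 1 ->
  lsum (W (S k) N) (Blo 0 ((1 - d) * (INR N / INR (S k)))) <= (INR (S k) * rho (INR (S k)) d) ^ N.
Proof. intros Hd. set (Q := INR (S k)). assert (HQ : 1 <= Q) by (unfold Q; rewrite S_INR; pose proof (pos_INR k); lra).
 eapply Rle_trans; [apply (tail_lo (S k) N 0 _ (d / 4)); [lia|lra]|].
 replace (d / 4 * ((1 - d) * (INR N / Q))) with (INR N * (- (-1) * (d / 4) * ((1 + -1 * d) / Q))) by (field; lra).
 replace (- (d / 4)) with (-1 * (d / 4)) by ring.
 rewrite exp_pow_n, <- Rpow_mult_distr. apply pow_incr. split.
 - apply Rmult_le_pos; [left; apply exp_pos|]. pose proof (exp_pos (-1 * (d/4))). unfold Q in HQ. lra.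
 - rewrite Rmult_comm. fold Q. apply (base_bound Q d (-1)); auto.
Qed.

Lemma lenW q N : INR (length (W q N)) = INR q ^ N.
Proof. rewrite <- W_count, lsum_const; ring. Qed.

Lemma partb_core k gam N j d : (j < k)%nat -> 0 < d <= 1 -> (1 <= N)%nat ->
  2 * INR (S k) * (INR (S k) ^ N * INR (S k) ^ N) * rho (INR (S k)) d ^ N <= d * nval k gam N 0 ->
  (1 - 3 * d) * nval k gam N 0 <= nval k gam N (gam j).
Proof. intros Hj Hd HN Hyp.
 set (Q := INR (S k)) in *. assert (HQ : 1 <= Q) by (unfold Q; rewrite S_INR; pose proof (pos_INR k); lra).
 assert (HNr : 1 <= INR N) by (apply (le_INR 1); auto).
 set (m := INR N / Q). assert (Hm : 0 < m) by (unfold m; apply Rdiv_lt_0_compat; lra).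
 set (WW := W (S k) N).
 assert (LW : INR (length WW) = Q ^ N) by apply lenW.
 set (Z := Q ^ N * Q ^ N * rho Q d ^ N).
 assert (HZ : 0 <= Z) by (unfold Z; apply Rmult_le_pos; [apply Rmult_le_pos|]; apply pow_le; unfold rho; try lra; left; apply exp_pos).
 assert (HQN : 0 <= Q ^ N) by (apply pow_le; lra).
 pose proof (tail_lo' k N d Hd) as Tlo. pose proof (tail_hi' k N j d Hj Hd) as Thi.
 fold Q m WW in Tlo, Thi. rewrite Rpow_mult_distr in Tlo, Thi.
 set (n0 := nval k gam N 0). set (nj := nval k gam N (gam j)).
 assert (Hn0 : 0 <= n0) by (apply lsum_nonneg; intros; apply lsum_nonneg; intros; apply dlt_range).
 pose proof (dbl_count k gam N j Hj) as DC. fold WW in DC.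
 assert (LB : (1 - d) * m * n0 - (1 - d) * m * Z <=
   lsum WW (fun u => lsum WW (fun v => INR (cnt 0 u) * dlt (Gam gam u - Gam gam v - 0)))).
 { apply Rle_trans with (lsum WW (fun u => lsum WW (fun v => (1 - d) * m * dlt (Gam gam u - Gam gam v - 0) - (1 - d) * m * Blo 0 ((1 - d) * m) u))).
   - rewrite lsum_swap. rewrite (lsum_ext WW _ (fun v => lsum WW (fun u => (1 - d) * m * dlt (Gam gam u - Gam gam v - 0)) - (1 - d) * m * lsum WW (Blo 0 ((1 - d) * m)))) by (intros; rewrite lsum_minus, !lsum_scal; reflexivity).
     rewrite lsum_minus, lsum_const, LW.
     assert (E1 : lsum WW (fun v => lsum WW (fun u => (1 - d) * m * dlt (Gam gam u - Gam gam v - 0))) = (1 - d) * m * n0)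
       by (unfold n0, nval; fold WW; rewrite lsum_swap, <- lsum_scal; apply lsum_ext; intros; rewrite <- lsum_scal; reflexivity).
     rewrite E1.
     assert ((1 - d) * m * lsum WW (Blo 0 ((1 - d) * m)) <= (1 - d) * m * (Q ^ N * rho Q d ^ N)) by (apply Rmult_le_compat_l; [nra|auto]).
     unfold Z. nra.
   - apply lsum_le; intros u Hu; apply lsum_le; intros v _.
     pose proof (dlt_range (Gam gam u - Gam gam v - 0)). pose proof (pos_INR (cnt 0 u)).
     unfold Blo. destruct (Rlt_dec (INR (cnt 0 u)) ((1 - d) * m)); nra. }
 assert (UB : lsum WW (fun u => lsum WW (fun v => INR (cnt (S j) u) * dlt (Gam gam u - Gam gam v - gam j)))
    <= (1 + d) * m * nj + INR N * Z).
 { apply Rle_trans with (lsum WW (fun u => lsum WW (fun v => (1 + d) * m * dlt (Gam gam u - Gam gam v - gam j) + INR N * Bhi (S j) ((1 + d) * m) u))).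
   - apply lsum_le; intros u Hu; apply lsum_le; intros v _.
     pose proof (dlt_range (Gam gam u - Gam gam v - gam j)). pose proof (pos_INR (cnt (S j) u)).
     assert (INR (cnt (S j) u) <= INR N).
     { apply le_INR. destruct (W_prop _ _ _ Hu) as [<- _]. apply cnt_le. }
     unfold Bhi. destruct (Rlt_dec ((1 + d) * m) (INR (cnt (S j) u))); nra.
   - rewrite lsum_swap. rewrite (lsum_ext WW _ (fun v => lsum WW (fun u => (1 + d) * m * dlt (Gam gam u - Gam gam v - gam j)) + INR N * lsum WW (Bhi (S j) ((1 + d) * m)))) by (intros; rewrite lsum_plus, !lsum_scal; reflexivity).
     rewrite lsum_plus, lsum_const, LW.
     assert (E1 : lsum WW (fun v => lsum WW (fun u => (1 + d) * m * dlt (Gam gam u - Gam gam v - gam j))) = (1 + d) * m * nj)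
       by (unfold nj, nval; fold WW; rewrite lsum_swap, <- lsum_scal; apply lsum_ext; intros; rewrite <- lsum_scal; reflexivity).
     rewrite E1.
     assert (INR N * lsum WW (Bhi (S j) ((1 + d) * m)) <= INR N * (Q ^ N * rho Q d ^ N)) by (apply Rmult_le_compat_l; [lra|auto]).
     unfold Z. nra. }
 assert (Key : (1 - d) * n0 - (1 - d) * Z <= (1 + d) * nj + Q * Z).
 { assert (E : (1 - d) * m * n0 - (1 - d) * m * Z <= (1 + d) * m * nj + INR N * Z) by lra.
   apply Rmult_le_reg_l with m; auto.
   replace (INR N) with (m * Q) in E by (unfold m; field; lra). nra. }
 assert (HZ2 : 2 * Q * Z <= d * n0) by (unfold Z; replace (2 * Q * (Q ^ N * Q ^ N * rho Q d ^ N)) with (2 * Q * (Q ^ N * Q ^ N) * rho Q d ^ N) by ring; exact Hyp).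
 assert (S2 : (1 - 2 * d) * n0 <= (1 + d) * nj) by nra.
 apply Rmult_le_reg_l with (1 + d); [lra|]. nra.
Qed.


Lemma cauchy_schwarz {A} (l : list A) f :
  (lsum l f) ^ 2 <= INR (length l) * lsum l (fun a => f a ^ 2).
Proof.
 assert (H : 0 <= lsum l (fun a => lsum l (fun b => (f a - f b) ^ 2))).
 { apply lsum_nonneg; intros; apply lsum_nonneg; intros; apply pow2_ge_0. }
 assert (E : lsum l (fun a => lsum l (fun b => (f a - f b) ^ 2)) =
   2 * (INR (length l) * lsum l (fun a => f a ^ 2)) - 2 * (lsum l f) ^ 2).
 { transitivity (lsum l (fun a => INR (length l) * f a ^ 2 - 2 * f a * lsum l f + lsum l (fun b => f b ^ 2))).
   - apply lsum_ext; intros a _.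
     transitivity (lsum l (fun b => (f a ^ 2 - 2 * f a * f b) + f b ^ 2)).
     + apply lsum_ext; intros; ring.
     + rewrite lsum_plus, lsum_minus, lsum_const, lsum_scal. ring.
   - rewrite lsum_plus, lsum_minus, lsum_scal, lsum_const.
     rewrite (lsum_ext l (fun a => 2 * f a * lsum l f) (fun a => (2 * lsum l f) * f a)) by (intros; ring).
     rewrite lsum_scal. ring. }
 lra.
Qed.

Lemma lsum_ge_term {A} (l : list A) f a : In a l -> (forall b, In b l -> 0 <= f b) -> f a <= lsum l f.
Proof. induction l as [|x l IH]; intros Ha Hf; simpl in Ha; [destruct Ha|].
 rewrite lsum_cons. destruct Ha as [->|Ha].
 - assert (0 <= lsum l f) by (apply lsum_nonneg; intros; apply Hf; right; auto). specialize (Hf a (or_introl eq_refl)). lra.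
 - assert (f a <= lsum l f) by (apply IH; auto; intros; apply Hf; right; auto). specialize (Hf x (or_introl eq_refl)). lra.
Qed.

Lemma Gam_cnt k gam u : List.Forall (fun i => (i < S k)%nat) u ->
  Gam gam u = lsum (seq 0 k) (fun i => INR (cnt (S i) u) * gam i).
Proof. induction 1 as [|i w Hi Hw IH]; simpl Gam.
 - symmetry. transitivity (lsum (seq 0 k) (fun _ => 0)). apply lsum_ext; intros; simpl; ring.
   rewrite lsum_const; ring.
 - rewrite IH. transitivity (lsum (seq 0 k) (fun i' => (if Nat.eq_dec i (S i') then gam i' else 0) + INR (cnt (S i') w) * gam i')).
   + rewrite lsum_plus. f_equal. destruct i as [|p].
     * simpl. transitivity (lsum (seq 0 k) (fun _ => 0)). rewrite lsum_const; ring. apply lsum_ext; intros; reflexivity.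
     * simpl g. rewrite (lsum_ext _ _ (fun i' => if Nat.eq_dec i' p then gam i' else 0)).
       -- rewrite lsum_delta. destruct (lt_dec p k); [reflexivity|lia].
       -- intros i' _. destruct (Nat.eq_dec (S p) (S i')), (Nat.eq_dec i' p); subst; try reflexivity; lia.
   + apply lsum_ext; intros i' _. rewrite INR_cnt_cons. destruct (Nat.eq_dec i (S i')); ring.
Qed.

Fixpoint enc (B : nat) (ds : list nat) : nat :=
  match ds with nil => O | d :: r => (d + B * enc B r)%nat end.

Lemma enc_lt B ds : List.Forall (fun d => (d < B)%nat) ds -> (enc B ds < B ^ length ds)%nat.
Proof. induction 1; simpl; [lia|]. nia. Qed.

Lemma enc_inj B ds1 : forall ds2, List.Forall (fun d => (d < B)%nat) ds1 -> List.Forall (fun d => (d < B)%nat) ds2 ->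
  length ds1 = length ds2 -> enc B ds1 = enc B ds2 -> ds1 = ds2.
Proof. induction ds1 as [|a r IH]; intros [|b r2] H1 H2 Hl He; simpl in *; try lia; auto.
 inversion H1; inversion H2; subst.
 assert (a = b /\ enc B r = enc B r2) as [-> E].
 { assert (enc B r < enc B r2 \/ enc B r = enc B r2 \/ enc B r2 < enc B r)%nat as [h|[h|h]] by lia; try nia. }
 f_equal. apply IH; auto.
Qed.

Definition ind (b : bool) : R := if b then 1 else 0.
Definition ieq (a b : nat) : R := if Nat.eq_dec a b then 1 else 0.

Lemma map_eq_in {A B} (f h : A -> B) l i : map f l = map h l -> In i l -> f i = h i.
Proof. induction l; simpl; intros E Hi; [destruct Hi|]. injection E; intros E2 E1.
 destruct Hi as [<-|Hi]; auto. Qed.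

Section PartA.
Variable k N : nat.
Variable gam : nat -> R.
Hypothesis HN : (1 <= N)%nat.

Let q := S k.
Let Q := INR q.
Let s := Nat.sqrt N.
Let m0 := (N / q)%nat.
Let lo := (m0 - 3 * s)%nat.
Let B := (6 * s + 2)%nat.
Let K := (B ^ k)%nat.
Let WW := W q N.
Definition dig (u : list nat) := map (fun i => (cnt (S i) u - lo)%nat) (seq 0 k).
Definition Gb (u : list nat) := forallb (fun i => andb (Nat.leb lo (cnt (S i) u)) (Nat.ltb (cnt (S i) u) (lo + B)%nat)) (seq 0 k).
Definition ee (u : list nat) := enc B (dig u).

Lemma s_ge1 : (1 <= s)%nat.
Proof. unfold s. destruct (Nat.sqrt_spec N) as [_ H]; [lia|].
 destruct (Nat.sqrt N); lia. Qed.

Lemma N_le_4s2 : (N <= 4 * s * s)%nat.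
Proof. pose proof s_ge1 as H0. unfold s in *. destruct (Nat.sqrt_spec N) as [_ H]; [lia|]. nia. Qed.

Lemma bounds_of_real c : Rabs (Q * INR c - INR N) < 3 * Q * INR s -> (lo <= c)%nat /\ (c < lo + B)%nat.
Proof. intros H. apply Rabs_def2 in H. destruct H as [H1 H2].
 assert (A1 : (q * c < N + 3 * q * s)%nat).
 { apply INR_lt. rewrite plus_INR, !mult_INR. fold Q. simpl (INR 3). lra. }
 assert (A2 : (N < q * c + 3 * q * s)%nat).
 { apply INR_lt. rewrite plus_INR, !mult_INR. fold Q. simpl (INR 3). lra. }
 assert (D1 : (q * m0 <= N)%nat) by (unfold m0; apply Nat.mul_div_le; unfold q; lia).
 assert (D2 : (N < q * (m0 + 1))%nat).
 { unfold m0. pose proof (Nat.div_mod N q ltac:(unfold q; lia)). pose proof (Nat.mod_upper_bound N q ltac:(unfold q; lia)). nia. }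
 assert (c + 3 * s > m0)%nat by nia.
 assert (c < m0 + 1 + 3 * s)%nat by nia.
 unfold lo, B. lia.
Qed.

Lemma Q_ge1 : 1 <= Q.
Proof. unfold Q, q. rewrite S_INR. pose proof (pos_INR k). lra. Qed.
Lemma s_pos : 1 <= INR s.
Proof. apply (le_INR 1). apply s_ge1. Qed.

Lemma G_false u : Gb u = false -> exists i, (i < k)%nat /\ 9 * Q ^ 2 * INR s ^ 2 <= (Q * INR (cnt (S i) u) - INR N) ^ 2.
Proof. intros H. unfold Gb in H.
 destruct (existsb (fun i => negb (andb (Nat.leb lo (cnt (S i) u)) (Nat.ltb (cnt (S i) u) (lo + B)%nat))) (seq 0 k)) eqn:E.
 - apply existsb_exists in E. destruct E as [i [Hi E]]. apply in_seq in Hi. exists i. split; [lia|].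
   destruct (Rlt_dec (Rabs (Q * INR (cnt (S i) u) - INR N)) (3 * Q * INR s)) as [h|h].
   + apply bounds_of_real in h. destruct h as [h1 h2].
     apply Nat.leb_le in h1. apply Nat.ltb_lt in h2. rewrite h1, h2 in E. discriminate.
   + apply Rnot_lt_le in h. pose proof Q_ge1. pose proof s_pos.
     set (x := Q * INR (cnt (S i) u) - INR N) in *.
     assert (HH : (3 * Q * INR s) ^ 2 <= x ^ 2) by (rewrite <- (pow2_abs x); apply pow_incr; nra).
     replace (9 * Q ^ 2 * INR s ^ 2) with ((3 * Q * INR s) ^ 2) by ring. exact HH.
 - exfalso. assert (forallb (fun i => andb (Nat.leb lo (cnt (S i) u)) (Nat.ltb (cnt (S i) u) (lo + B)%nat)) (seq 0 k) = true).
   { apply forallb_forall. intros i0 Hi0. cbv beta. destruct (andb (Nat.leb lo (cnt (S i0) u)) (Nat.ltb (cnt (S i0) u) (lo + B)%nat)) eqn:F; auto.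
     assert (existsb (fun i => negb (andb (Nat.leb lo (cnt (S i) u)) (Nat.ltb (cnt (S i) u) (lo + B)%nat))) (seq 0 k) = true).
     { apply existsb_exists. exists i0. split; auto. cbv beta. rewrite F. auto. }
     congruence. }
   congruence.
Qed.

Lemma Q_eq : Q = INR k + 1.
Proof. unfold Q, q. apply S_INR. Qed.

Lemma Gcount : INR q ^ N / 2 <= lsum WW (fun u => ind (Gb u)).
Proof.
 pose proof Q_ge1 as HQ. pose proof s_pos as Hs.
 set (D := 9 * Q ^ 2 * INR s ^ 2).
 assert (HD : 0 < D) by (unfold D; assert (0 < Q ^ 2 * INR s ^ 2) by (apply Rmult_lt_0_compat; apply pow_lt; lra); lra).
 assert (P : forall u, In u WW -> 1 - ind (Gb u) <= lsum (seq 0 k) (fun i => (Q * INR (cnt (S i) u) - INR N) ^ 2 * / D)).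
 { intros u _. unfold ind. destruct (Gb u) eqn:G.
   - assert (0 <= lsum (seq 0 k) (fun i => (Q * INR (cnt (S i) u) - INR N) ^ 2 * / D)).
     { apply lsum_nonneg; intros. apply Rmult_le_pos; [apply pow2_ge_0| left; apply Rinv_0_lt_compat; auto]. }
     lra.
   - destruct (G_false u G) as [i [Hi Hb]].
     apply Rle_trans with ((Q * INR (cnt (S i) u) - INR N) ^ 2 * / D).
     + apply Rmult_le_reg_r with D; auto. rewrite Rmult_assoc, Rinv_l by lra. fold D in Hb. lra.
     + apply (lsum_ge_term (seq 0 k) (fun i => (Q * INR (cnt (S i) u) - INR N) ^ 2 * / D) i). apply in_seq; lia.
       intros; apply Rmult_le_pos; [apply pow2_ge_0| left; apply Rinv_0_lt_compat; auto]. }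
 assert (S1 : lsum WW (fun u => 1 - ind (Gb u)) <= lsum WW (fun u => lsum (seq 0 k) (fun i => (Q * INR (cnt (S i) u) - INR N) ^ 2 * / D))) by (apply lsum_le; auto).
 assert (WC : lsum WW (fun _ => 1) = INR q ^ N) by apply W_count.
 rewrite lsum_minus, WC in S1. rewrite lsum_swap in S1.
 rewrite (lsum_ext (seq 0 k) _ (fun _ => INR q ^ N * INR N * (Q - 1) * / D)) in S1.
 2: { intros i Hi. apply in_seq in Hi. rewrite lsum_scalr. unfold WW, Q. rewrite second_moment by (unfold q; lia). reflexivity. }
 rewrite lsum_const, length_seq in S1.
 assert (HN4 : INR N <= 4 * INR s ^ 2).
 { pose proof N_le_4s2. apply le_INR in H. rewrite !mult_INR in H. simpl (INR 4) in H. simpl. lra. }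
 assert (Hk : INR k = Q - 1) by (rewrite Q_eq; ring).
 fold Q in S1. rewrite Hk in S1.
 assert (HQN : 0 < Q ^ N) by (apply pow_lt; lra).
 assert (Bd : (Q - 1) * (Q ^ N * INR N * (Q - 1) * / D) <= Q ^ N / 2).
 { assert (0 <= Q - 1) by lra.
   assert ((Q - 1) ^ 2 <= Q ^ 2) by nra.
   pose proof (pos_INR N). assert (M : (Q - 1) ^ 2 * INR N <= Q ^ 2 * (4 * INR s ^ 2)) by (apply Rmult_le_compat; try nra; apply pow2_ge_0).
   assert (R1 : (Q - 1) ^ 2 * INR N * / D <= / 2).
   { apply Rmult_le_reg_r with D; auto. rewrite Rmult_assoc, Rinv_l by lra.
     assert (0 <= Q ^ 2 * INR s ^ 2) by (apply Rmult_le_pos; apply pow2_ge_0). unfold D. lra. }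
   replace ((Q - 1) * (Q ^ N * INR N * (Q - 1) * / D)) with (Q ^ N * ((Q - 1) ^ 2 * INR N * / D)) by ring.
   nra. }
 fold Q. lra.
Qed.

Lemma Gb_bounds u i : Gb u = true -> (i < k)%nat -> (lo <= cnt (S i) u)%nat /\ (cnt (S i) u < lo + B)%nat.
Proof. intros G Hi. unfold Gb in G. rewrite forallb_forall in G.
 specialize (G i ltac:(apply in_seq; lia)). apply andb_prop in G. destruct G as [G1 G2].
 apply Nat.leb_le in G1. apply Nat.ltb_lt in G2. auto. Qed.

Lemma dig_lt u : Gb u = true -> List.Forall (fun d => (d < B)%nat) (dig u).
Proof. intros G. apply Forall_forall. intros d Hd. unfold dig in Hd. apply in_map_iff in Hd.
 destruct Hd as [i [<- Hi]]. apply in_seq in Hi. destruct (Gb_bounds u i G) as [h1 h2]; lia. Qed.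

Lemma dig_len u : length (dig u) = k.
Proof. unfold dig. rewrite length_map, length_seq. reflexivity. Qed.

Lemma ee_lt u : Gb u = true -> (ee u < K)%nat.
Proof. intros G. unfold ee, K. rewrite <- (dig_len u). apply enc_lt, dig_lt; auto. Qed.

Lemma pair_eq u v : In u WW -> In v WW -> Gb u = true -> Gb v = true -> ee u = ee v -> Gam gam u = Gam gam v.
Proof. intros Hu Hv Gu Gv E.
 assert (Dg : dig u = dig v) by (apply enc_inj with B; auto using dig_lt; rewrite !dig_len; auto).
 destruct (W_prop _ _ _ Hu) as [_ Fu]. destruct (W_prop _ _ _ Hv) as [_ Fv].
 rewrite (Gam_cnt k gam u Fu), (Gam_cnt k gam v Fv). apply lsum_ext; intros i Hi.
 pose proof (map_eq_in _ _ _ i Dg Hi) as Ei. simpl in Ei. apply in_seq in Hi.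
 destruct (Gb_bounds u i Gu) as [a1 _]; [lia|]. destruct (Gb_bounds v i Gv) as [b1 _]; [lia|].
 f_equal. f_equal. lia.
Qed.

Definition Mw (u : list nat) (r : nat) : R := ind (Gb u) * ieq r (ee u).

Lemma sum_ieq e : (e < K)%nat -> lsum (seq 0 K) (fun r => ieq r e) = 1.
Proof. intros He. unfold ieq. rewrite (lsum_delta K e (fun _ => 1)). destruct (lt_dec e K); [reflexivity|lia]. Qed.

Lemma pair_bound u v : In u WW -> In v WW ->
  lsum (seq 0 K) (fun r => Mw u r * Mw v r) <= dlt (Gam gam u - Gam gam v - 0).
Proof. intros Hu Hv. pose proof (dlt_range (Gam gam u - Gam gam v - 0)) as Dr. unfold Mw, ind.
 destruct (Gb u) eqn:Gu; [destruct (Gb v) eqn:Gv|].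
 - rewrite (lsum_ext _ _ (fun r => if Nat.eq_dec r (ee u) then ieq r (ee v) else 0)).
   + rewrite lsum_delta. destruct (lt_dec (ee u) K) as [_|h]; [|exfalso; apply h, ee_lt; auto].
     unfold ieq. destruct (Nat.eq_dec (ee u) (ee v)) as [e|e]; [|lra].
     rewrite (pair_eq u v Hu Hv Gu Gv e). unfold dlt. destruct (Req_EM_T _ 0) as [_|h]; [lra|exfalso; apply h; ring].
   + intros r _. unfold ieq. destruct (Nat.eq_dec r (ee u)), (Nat.eq_dec r (ee v)); ring.
 - rewrite (lsum_ext _ _ (fun _ => 0)) by (intros; ring). rewrite lsum_const. lra.
 - rewrite (lsum_ext _ _ (fun _ => 0)) by (intros; ring). rewrite lsum_const. lra.
Qed.

Lemma partA_core : (lsum WW (fun u => ind (Gb u))) ^ 2 <= INR K * nval k gam N 0.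
Proof.
 assert (T : lsum (seq 0 K) (fun r => lsum WW (fun u => Mw u r)) = lsum WW (fun u => ind (Gb u))).
 { rewrite lsum_swap. apply lsum_ext; intros u _. unfold Mw. rewrite lsum_scal.
   unfold ind. destruct (Gb u) eqn:G; [|ring]. rewrite sum_ieq by (apply ee_lt; auto). ring. }
 rewrite <- T. eapply Rle_trans; [apply cauchy_schwarz|]. rewrite length_seq.
 apply Rmult_le_compat_l; [apply pos_INR|].
 unfold nval. fold q. fold WW.
 apply Rle_trans with (lsum WW (fun u => lsum WW (fun v => lsum (seq 0 K) (fun r => Mw u r * Mw v r)))).
 - apply Req_le.
   transitivity (lsum (seq 0 K) (fun r => lsum WW (fun u => lsum WW (fun v => Mw u r * Mw v r)))).
   + apply lsum_ext; intros r _. simpl. rewrite Rmult_1_r, lsum_mult. reflexivity.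
   + rewrite lsum_swap. apply lsum_ext; intros u _. rewrite lsum_swap. reflexivity.
 - apply lsum_le; intros u Hu; apply lsum_le; intros v Hv. apply pair_bound; auto.
Qed.

Lemma partA_bound : / (4 * 8 ^ k) * (INR k + 1) ^ (2 * N) / sqrt (INR N) ^ k <= nval k gam N 0.
Proof.
 pose proof Gcount as Gc. pose proof partA_core as Pc. pose proof s_pos as Hs.
 set (G := lsum WW (fun u => ind (Gb u))) in *.
 set (n0 := nval k gam N 0) in *.
 assert (Hn0 : 0 <= n0) by (apply lsum_nonneg; intros; apply lsum_nonneg; intros; apply dlt_range).
 assert (HNr : 1 <= INR N) by (apply (le_INR 1); auto).
 assert (Hsq : INR s <= sqrt (INR N)).
 { rewrite <- (sqrt_pow2 (INR s)) by lra. apply sqrt_le_1_alt. rewrite <- pow_INR.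
   apply le_INR. unfold s. simpl. rewrite Nat.mul_1_r. apply Nat.sqrt_spec. lia. }
 assert (HK : INR K <= 8 ^ k * sqrt (INR N) ^ k).
 { unfold K. rewrite pow_INR, <- Rpow_mult_distr. apply pow_incr. split; [apply pos_INR|].
   unfold B. rewrite plus_INR, mult_INR. simpl (INR 6). simpl (INR 2). lra. }
 assert (Hsp : 0 < sqrt (INR N) ^ k) by (apply pow_lt, sqrt_lt_R0; lra).
 assert (H8 : 0 < 8 ^ k) by (apply pow_lt; lra).
 rewrite <- Q_eq, Nat.mul_comm, pow_mult.
 assert (HQN : 0 <= INR q ^ N) by (apply pow_le, pos_INR).
 assert (E1 : (INR q ^ N / 2) ^ 2 <= G ^ 2) by (apply pow_incr; lra).
 assert (E2 : INR K * n0 <= 8 ^ k * sqrt (INR N) ^ k * n0) by (apply Rmult_le_compat_r; auto).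
 unfold Q. apply Rmult_le_reg_r with (sqrt (INR N) ^ k); auto.
 unfold Rdiv. rewrite Rmult_assoc, Rinv_l by lra. rewrite Rmult_1_r.
 apply Rmult_le_reg_l with (4 * 8 ^ k); [lra|]. rewrite <- Rmult_assoc, Rinv_r by lra.
 assert (E3 : (INR q ^ N / 2) ^ 2 = (INR q ^ N) ^ 2 / 4) by field.
 nra.
Qed.

End PartA.


Lemma nat_above (r : R) : exists n : nat, r < INR n.
Proof. destruct (archimed r) as [H _]. destruct (Z_le_gt_dec 0 (up r)) as [h|h].
 - exists (Z.to_nat (up r)). rewrite INR_IZR_INZ, Z2Nat.id by auto. lra.
 - exists O. simpl. apply Z.gt_lt in h. apply IZR_lt in h. lra.
Qed.

Lemma asym k d c : 0 < d -> 0 < c -> exists N0 : nat, forall N : nat, (N0 <= N)%nat ->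
  (1 <= N)%nat /\ 2 * INR (S k) * rho (INR (S k)) d ^ N * sqrt (INR N) ^ k <= d * c.
Proof. intros Hd Hc.
 set (Q := INR (S k)). assert (HQ : 1 <= Q) by (unfold Q; rewrite S_INR; pose proof (pos_INR k); lra).
 set (ka := d ^ 2 / (8 * Q)). assert (Hka : 0 < ka) by (unfold ka; apply Rdiv_lt_0_compat; [apply pow_lt|]; lra).
 set (A := (Q / ka) ^ S k). assert (HA : 0 < A) by (unfold A; apply pow_lt, Rdiv_lt_0_compat; lra).
 destruct (nat_above (2 * Q * A / (d * c))) as [n Hn].
 exists (Nat.max 1 n). intros N HN. split; [lia|].
 assert (HNr : 1 <= INR N) by (apply (le_INR 1); lia).
 assert (HnN : INR n <= INR N) by (apply le_INR; lia).
 assert (Ex : (ka * INR N / Q) ^ S k <= exp (ka * INR N)).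
 { replace (ka * INR N) with (INR (S k) * (ka * INR N / Q)) at 2 by (change (INR (S k)) with Q; field; lra).
   rewrite exp_pow_n. apply pow_incr. split.
   - apply Rdiv_le_0_compat; [apply Rmult_le_pos|]; lra.
   - pose proof (exp_ineq1_le (ka * INR N / Q)). lra. }
 assert (Hrho : rho Q d ^ N = / exp (ka * INR N)).
 { unfold rho. rewrite <- exp_pow_n, <- exp_Ropp. f_equal. unfold ka. ring. }
 assert (Hsq : sqrt (INR N) ^ k <= INR N ^ k).
 { apply pow_incr. split; [apply sqrt_pos|]. rewrite <- (sqrt_pow2 (INR N)) at 2 by lra.
   apply sqrt_le_1_alt. nra. }
 assert (Hpos : 0 < (ka * INR N / Q) ^ S k) by (apply pow_lt; apply Rdiv_lt_0_compat; [apply Rmult_lt_0_compat|]; lra).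
 assert (Hexp : 0 < exp (ka * INR N)) by apply exp_pos.
 assert (Key : rho Q d ^ N * INR N ^ k <= A / INR N).
 { rewrite Hrho. apply Rle_trans with (INR N ^ k / (ka * INR N / Q) ^ S k).
   - unfold Rdiv. rewrite Rmult_comm. apply Rmult_le_compat_l; [apply pow_le; lra|].
     apply Rinv_le_contravar; auto.
   - unfold A. apply Req_le. unfold Rdiv. rewrite !Rpow_mult_distr, !pow_inv. simpl.
     assert (INR N ^ k <> 0) by (apply pow_nonzero; lra).
     assert (ka ^ k <> 0) by (apply pow_nonzero; lra).
     assert (Q ^ k <> 0) by (apply pow_nonzero; lra).
     field. repeat split; lra. }
 assert (HrN : 0 <= rho Q d ^ N) by (apply pow_le; unfold rho; left; apply exp_pos).
 apply Rle_trans with (2 * Q * (A / INR N)).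
 - rewrite Rmult_assoc. apply Rmult_le_compat_l; [lra|]. eapply Rle_trans; [|apply Key].
   apply Rmult_le_compat_l; auto.
 - assert (2 * Q * A / (d * c) < INR N) by lra.
   assert (0 < d * c) by (apply Rmult_lt_0_compat; auto).
   apply Rmult_le_reg_r with (INR N); [lra|]. unfold Rdiv. rewrite Rmult_assoc, (Rmult_assoc A), Rinv_l by lra.
   apply Rmult_lt_compat_l with (r := d * c) in H; auto. unfold Rdiv in H.
   rewrite Rmult_comm, Rmult_assoc, Rinv_l, Rmult_1_r in H by lra. lra.
Qed.

Theorem lemma4p2 :
  (forall k : nat, exists c : R, 0 < c /\
     forall (gam : nat -> R) (N : nat), distinct_freqs k gam -> (1 <= N)%nat ->
       exists L : R, A_N_is k gam N 0 L /\
         c * (INR k + 1) ^ (2 * N) / (sqrt (INR N)) ^ k <= L)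
  /\
  (forall (k : nat) (eps : R), 0 < eps -> exists N0 : nat,
     forall (gam : nat -> R) (j N : nat), distinct_freqs k gam -> (j < k)%nat ->
       (N0 <= N)%nat ->
       exists L0 Lj : R, A_N_is k gam N 0 L0 /\ A_N_is k gam N (gam j) Lj /\
         (1 - eps) * L0 <= Lj).
Proof. split.
 - intros k. exists (/ (4 * 8 ^ k)). split.
   + apply Rinv_0_lt_compat. assert (0 < 8 ^ k) by (apply pow_lt; lra). lra.
   + intros gam N _ HN. exists (Lval k gam N 0). split; [apply A_N_Lval|].
     rewrite Lval_nval. apply partA_bound; auto.
 - intros k eps Heps.
   set (d := Rmin eps 1 / 3).
   assert (Hd : 0 < d <= 1) by (unfold d; pose proof (Rmin_l eps 1); pose proof (Rmin_r eps 1);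
     assert (0 < Rmin eps 1) by (apply Rmin_glb_lt; lra); lra).
   assert (Hd3 : 3 * d <= eps) by (unfold d; pose proof (Rmin_l eps 1); lra).
   set (c := / (4 * 8 ^ k)).
   assert (Hc : 0 < c) by (unfold c; apply Rinv_0_lt_compat; assert (0 < 8 ^ k) by (apply pow_lt; lra); lra).
   destruct (asym k d c ltac:(lra) Hc) as [N0 HN0].
   exists N0. intros gam j N _ Hj HN. destruct (HN0 N HN) as [HN1 Hsm].
   exists (Lval k gam N 0), (Lval k gam N (gam j)). split; [apply A_N_Lval|]. split; [apply A_N_Lval|].
   rewrite !Lval_nval.
   pose proof (partA_bound k N gam HN1) as PA. fold c in PA.
   set (n0 := nval k gam N 0) in *.
   assert (Hn0 : 0 <= n0) by (apply lsum_nonneg; intros; apply lsum_nonneg; intros; apply dlt_range).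
   assert (Hyp : 2 * INR (S k) * (INR (S k) ^ N * INR (S k) ^ N) * rho (INR (S k)) d ^ N <= d * n0).
   { rewrite S_INR in *. set (Q := INR k + 1) in *.
     assert (HQ2 : Q ^ (2 * N) = Q ^ N * Q ^ N) by (rewrite Nat.mul_comm, pow_mult; simpl; ring).
     rewrite HQ2 in PA.
     assert (HNr : 1 <= INR N) by (apply (le_INR 1); auto).
     assert (Hsp : 0 < sqrt (INR N) ^ k) by (apply pow_lt, sqrt_lt_R0; lra).
     assert (HQN : 0 <= Q ^ N * Q ^ N) by (apply Rmult_le_pos; apply pow_le; unfold Q; pose proof (pos_INR k); lra).
     assert (PA' : c * (Q ^ N * Q ^ N) <= n0 * sqrt (INR N) ^ k).
     { apply Rmult_le_reg_r with (/ sqrt (INR N) ^ k). apply Rinv_0_lt_compat; auto.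
       rewrite (Rmult_assoc n0), Rinv_r by lra. unfold Rdiv in PA. lra. }
     apply Rmult_le_reg_r with (sqrt (INR N) ^ k); auto.
     apply Rle_trans with ((Q ^ N * Q ^ N) * (d * c)).
     - replace (2 * Q * (Q ^ N * Q ^ N) * rho Q d ^ N * sqrt (INR N) ^ k) with ((Q ^ N * Q ^ N) * (2 * Q * rho Q d ^ N * sqrt (INR N) ^ k)) by ring.
       apply Rmult_le_compat_l; auto.
     - nra. }
   pose proof (partb_core k gam N j d Hj Hd HN1 Hyp) as PB. fold n0 in PB. nra.
Qed.
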